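(* Let $R$ be a nonabelian group whose order is a product of two distinct primes, and let $S\subseteq R$. If $\mathrm{Cay}(R,S)$ is a nontrivial generalised wreath product, then $\mathrm{Aut}(R)_S>1$.
   Context: $\mathrm{Aut}(R)_S$ is the group of automorphisms of $R$ fixing $S$ setwise. $\mathrm{Cay}(R,S)$ (vertex set $R$, arcs $r\to sr$ for $s\in S$) is a nontrivial generalised wreath product if there exist subgroups $K,H$ with $1<K\trianglelefteq H<R$ and $K(S\setminus H)=S\setminus H=(S\setminus H)K$. *)

(* Defs.v *)
From mathcomp Require Import all_boot all_fingroup.
Set Implicit Arguments. Unset Strict Implicit. Unset Printing Implicit Defensive.
Local Open Scope group_scope.

Definition nontrivial_gwp (gT : finGroupType) (R : {group gT}) (S : {set gT}) :=
  exists K H : {group gT},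
    [/\ K :!=: 1, K <| H, H \proper R,
        K * (S :\: H) = S :\: H & (S :\: H) * K = S :\: H].

Definition AutS (gT : finGroupType) (R : {group gT}) (S : {set gT}) :
  {set {perm gT}} := [set a in Aut R | a @: S == S].

(* Main.v *)
Require Import Defs.
From mathcomp Require Import all_boot all_fingroup.
From mathcomp Require Import all_solvable.
Lemma small_div {p q d : nat} : prime p -> prime q -> p != q ->
  d %| p * q -> d < p * q -> d = 1%N \/ prime d.
Proof.
move=> pp pq npq dd ltd.
have [->|d1] := eqVneq d 1%N; first by left.
right.
have [pd|npd] := boolP (p %| d).
  move: dd ltd; case/dvdnP: pd => e ->; rewrite (mulnC e) dvdn_pmul2l ?prime_gt0 //.
  move=> eq.
  have [e1|e1] := eqVneq e 1%N; first by rewrite e1 muln1.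
  by rewrite ((prime_nt_dvdP pq e1) eq) ltnn.
have cp : coprime d p.
  by rewrite coprime_sym prime_coprime.
move: dd; rewrite Gauss_dvdr // => dq.
by rewrite ((prime_nt_dvdP pq d1) dq).
Qed.

Lemma small_cyclic {gT : finGroupType} {G : {group gT}} {p q : nat} :
  prime p -> prime q -> p != q -> #|G| %| p * q -> #|G| < p * q -> cyclic G.
Proof.
move=> pp pq npq dd ltd.
case: (small_div pp pq npq dd ltd) => [/card1_trivg ->|pr].
  exact: cyclic1.
exact: prime_cyclic.
Qed.

Local Open Scope group_scope.

Theorem corollary4p8 (gT : finGroupType) (R : {group gT}) (S : {set gT})
    (p q : nat) :
  prime p -> prime q -> p != q -> #|R| = (p * q)%N -> ~~ abelian R ->
  S \subset R ->
  nontrivial_gwp R S ->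
  AutS R S != [set 1].
Proof.
move=> pp pq npq cR nab sSR [K [H [ntK nKH prHR KS SK]]].
have sKH : K \subset H := normal_sub nKH.
have sHR : H \subset R := proper_sub prHR.
have abH : abelian H.
  apply: cyclic_abelian; apply: (small_cyclic pp pq npq).
    by rewrite -cR cardSg.
  by rewrite -cR proper_card.
have Z1 : 'Z(R) = 1.
  apply/eqP; apply: contraR nab => nZ.
  apply: cyclic_center_factor_abelian; apply: (small_cyclic pp pq npq).
    by rewrite card_quotient ?normal_norm ?center_normal // -cR dvdn_indexg.
  rewrite card_quotient ?normal_norm ?center_normal //.
  rewrite -cR -(Lagrange (center_sub R)) ltn_Pmull ?cardG_gt1 ?indexg_gt0 //.
have [k Kk ntk] := trivgPn _ ntK.
have Hk : k \in H := subsetP sKH _ Kk.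
have Rk : k \in R := subsetP sHR _ Hk.
pose a := conj_aut R k.
have aA : a \in Aut R := Aut_aut _ _.
have aS : a @: S \subset S.
  apply/subsetP => _ /imsetP [s Ss ->].
  rewrite conj_autE //; last exact: (subsetP sSR).
  have [Hs|nHs] := boolP (s \in H).
    have cks : commute s k := (centsP abH) s Hs k Hk.
    suff -> : s ^ k = s by []. by apply/conjg_fixP/commgP.
  have sD : s \in S :\: H by rewrite inE nHs.
  have m1 : k^-1 * s \in S :\: H by rewrite -KS mem_mulg ?groupV.
  have m2 : k^-1 * s * k \in S :\: H by rewrite -{1}SK mem_mulg.
  by move: m2; rewrite -mulgA -conjgE => /setDP [].
have aSe : a @: S = S.
  apply/eqP; rewrite eqEcard aS (card_imset _ (@perm_inj _ a)) leqnn. exact: isT.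
apply/negP => /eqP AE.
have : a \in AutS R S by rewrite inE aA aSe eqxx.
rewrite AE inE => /eqP a1.
have kZ : k \in 'Z(R).
  apply/centerP; split => // x Rx.
  have : a x = x by rewrite a1 perm1.
  rewrite conj_autE // => /conjg_fixP /commgP cxk.
  by apply: commute_sym.
by move: kZ; rewrite Z1 inE (negbTE ntk).
Qed.
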